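(* Let $m,k,t$ be positive integers with $t<(m-3)/4$, let $C=\{2i+1\mid 1\leq i\leq t\}\cup\{2t+2\}$, and let $c(x)=1+\sum_{j\in C}(x^j+x^{m-j})\in\mathbb{F}_2[x]$. Then $\gcd(c(x^k),x^m-1)=1$ if and only if $\gcd(m,(2t+3)k)=\gcd(m,(2t+1)k)=\gcd(m,3k)=\gcd(m,k)$.
   Context: All polynomials are over $\mathbb{F}_2$. *)

(* Defs.v *)
From HB Require Import structures.
From mathcomp Require Import all_boot all_order all_algebra.
Set Implicit Arguments. Unset Strict Implicit. Unset Printing Implicit Defensive.
Import GRing.Theory.
Local Open Scope ring_scope.

Definition Cset (t : nat) : seq nat :=
  [seq (2 * i + 1)%N | i <- iota 1 t] ++ [:: (2 * t + 2)%N].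

Definition cpoly (m t : nat) : {poly 'F_2} :=
  1 + \sum_(j <- Cset t) ('X^j + 'X^(m - j)).

(* Main.v *)
Require Import Defs.
From HB Require Import structures.
From mathcomp Require Import all_boot all_order all_algebra.
From mathcomp Require Import ring zify.
Import GRing.Theory.
Local Open Scope ring_scope.

Section Gen.
Variable F : fieldType.
Implicit Types p : {poly F}.

Lemma geo (R : comNzRingType) (x : R) a :
  (x - 1) * \sum_(i < a) x ^+ i = x ^+ a - 1.
Proof.
elim: a => [|a IH]; first by rewrite big_ord0 mulr0 expr0 subrr.
by rewrite big_ord_recr /= mulrDr IH exprS; ring.
Qed.

Lemma XnB1_dvd d q : ('X^d - 1 : {poly F}) %| 'X^(d * q) - 1.
Proof.
have := subrXX ('X^d : {poly F}) 1 q; rewrite expr1n -exprM => ->.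
by apply: dvdp_mulr; rewrite dvdpp.
Qed.

Lemma XnB1_dvdn d n : (d %| n)%N -> ('X^d - 1 : {poly F}) %| 'X^n - 1.
Proof. by move/dvdnP=> [q ->]; rewrite mulnC XnB1_dvd. Qed.

Lemma XnB1_dvdn_inv d n : (0 < d)%N -> ('X^d - 1 : {poly F}) %| 'X^n - 1 -> (d %| n)%N.
Proof.
move=> d0 H.
have E : ('X^n - 1 : {poly F}) = 'X^(n %% d) * ('X^(n %/ d * d) - 1) + ('X^(n %% d) - 1).
  by rewrite {1}(divn_eq n d) exprD; ring.
have H2 : ('X^d - 1 : {poly F}) %| 'X^(n %% d) - 1.
  have -> : ('X^(n %% d) - 1 : {poly F}) = ('X^n - 1) - 'X^(n %% d) * ('X^(n %/ d * d) - 1).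
    by rewrite E; ring.
  apply: dvdp_sub => //; apply: dvdp_mull; rewrite mulnC; exact: XnB1_dvd.
rewrite /dvdn; case r0: (n %% d)%N => [//|r].
have lt : (r.+1 < d)%N by rewrite -r0 ltn_mod.
move: H2; rewrite r0 => H2.
have := dvdp_leq _ H2.
rewrite -polyC1 !size_XnsubC //.
have -> : ('X^(r.+1) - 1%:P : {poly F}) != 0.
  by rewrite -size_poly_gt0 size_XnsubC.
by move=> /(_ isT); rewrite ltnS leqNgt lt.
Qed.

Lemma gcd_dvd a b p : (0 < a)%N -> p %| 'X^a - 1 -> p %| 'X^b - 1 ->
  p %| 'X^(gcdn a b) - 1.
Proof.
move=> a0 Ha Hb; case: (egcdnP b a0) => km kn E _.
have -> : ('X^(gcdn a b) - 1 : {poly F}) =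
   ('X^(km * a) - 1) - 'X^(gcdn a b) * ('X^(kn * b) - 1).
  by rewrite E exprD; ring.
apply: dvdp_sub.
  apply: dvdp_trans Ha _; apply: XnB1_dvdn; exact: dvdn_mull.
apply: dvdp_mull; apply: dvdp_trans Hb _; apply: XnB1_dvdn; exact: dvdn_mull.
Qed.

End Gen.

Lemma two0 : (2%:R : {poly 'F_2}) = 0.
Proof. by rewrite -polyC_natr; congr (_%:P); apply: val_inj. Qed.

Lemma natF2 a : odd a -> (a%:R : {poly 'F_2}) = 1.
Proof.
move=> Ha; rewrite -[a]odd_double_half Ha -muln2 natrD natrM two0 mulr0 addr0.
by [].
Qed.

Lemma geo_mod (R : comNzRingType) (x : R) a :
  \sum_(i < a) x ^+ i = (x - 1) * \sum_(i < a) \sum_(j < i) x ^+ j + a%:R.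
Proof.
elim: a => [|a IH]; first by rewrite !big_ord0 mulr0 addr0.
rewrite [LHS]big_ord_recr [in RHS]big_ord_recr /= -[x ^+ a](subrK 1) -(geo _ x a).
rewrite {1}IH -addn1 natrD; ring.
Qed.

Lemma copG (x : {poly 'F_2}) a : odd a -> coprimep (\sum_(i < a) x ^+ i) (x - 1).
Proof.
move=> Ha; apply/Bezout_eq1_coprimepP.
exists (1, - \sum_(i < a) \sum_(j < i) x ^+ j) => /=.
by rewrite geo_mod natF2 //; ring.
Qed.

Lemma key m k a : (0 < m)%N -> (0 < k)%N -> odd a ->
  coprimep (\sum_(i < a) ('X^k : {poly 'F_2}) ^+ i) ('X^m - 1)
  = (gcdn m (a * k) == gcdn m k).
Proof.
move=> m0 k0 Ha.
set G := \sum_(i < a) _.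
have hG : ('X^k - 1) * G = 'X^(a * k) - 1 by rewrite /G geo -exprM mulnC.
apply/idP/idP.
- move=> cop.
  set g := gcdn m (a * k).
  have g0 : (0 < g)%N by rewrite gcdn_gt0 m0.
  have h1 : ('X^g - 1 : {poly 'F_2}) %| 'X^m - 1 by apply: XnB1_dvdn; exact: dvdn_gcdl.
  have h2 : ('X^g - 1 : {poly 'F_2}) %| ('X^k - 1) * G.
    by rewrite hG; apply: XnB1_dvdn; exact: dvdn_gcdr.
  have c2 : coprimep ('X^g - 1) G.
    by rewrite coprimep_sym; exact: coprimep_dvdl h1 cop.
  rewrite Gauss_dvdpl // in h2.
  have gk := XnB1_dvdn_inv _ _ _ g0 h2.
  rewrite eqn_dvd; apply/andP; split.
    by rewrite dvdn_gcd dvdn_gcdl gk.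
  by rewrite dvdn_gcd dvdn_gcdl dvdn_mull // dvdn_gcdr.
- move/eqP=> E; apply/coprimepP => d dG dD.
  have d1 : d %| 'X^(a * k) - 1 by rewrite -hG; apply: dvdp_trans dG _; exact: dvdp_mull.
  have d2 := gcd_dvd _ _ _ _ m0 dD d1.
  rewrite E in d2.
  have d3 : d %| 'X^k - 1.
    by apply: dvdp_trans d2 _; apply: XnB1_dvdn; exact: dvdn_gcdr.
  by move: (copG ('X^k) _ Ha) => /coprimepP; apply.
Qed.

Set Implicit Arguments. Unset Strict Implicit.

Lemma comp_c m t k : cpoly m t \Po 'X^k =
  1 + \sum_(j <- Cset t) (('X^k : {poly 'F_2}) ^+ j + 'X^k ^+ (m - j)).
Proof.
rewrite /cpoly comp_polyD (comp_poly_multiplicative _).2 raddf_sum.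
congr (_ + _); apply: eq_bigr => j _.
by rewrite raddfD /= !comp_Xn_poly.
Qed.

Lemma mem_C t j : j \in Cset t -> (j <= 2 * t + 2)%N.
Proof.
rewrite mem_cat inE => /orP[/mapP[i] | /eqP -> //].
by rewrite mem_iota => /andP[_ h] ->; lia.
Qed.

Definition L (R : comNzRingType) (x : R) t :=
  x ^+ (2 * t + 2) + \sum_(j <- Cset t) (x ^+ (2 * t + 2 + j) + x ^+ (2 * t + 2 - j)).

Lemma shift (R : comNzRingType) (x : R) m t : (2 * t + 2 <= m)%N ->
  x ^+ (2 * t + 2) * (1 + \sum_(j <- Cset t) (x ^+ j + x ^+ (m - j)))
  = L x t + (x ^+ m - 1) * \sum_(j <- Cset t) x ^+ (2 * t + 2 - j).
Proof.
move=> hm; rewrite /L mulrDr mulr1 mulr_sumr mulr_sumr -addrA -big_split /=.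
congr (_ + _); rewrite !big_seq; apply: eq_bigr => j /mem_C hj.
rewrite mulrDr -!exprD.
have -> : (2 * t + 2 + (m - j) = (2 * t + 2 - j) + m)%N by lia.
rewrite (exprD x (2 * t + 2 - j) m).
move: (x ^+ (2 * t + 2 - j)) (x ^+ (2 * t + 2 + j)) (x ^+ m) => u v w; ring.
Qed.

Lemma Lform (R : comNzRingType) (x : R) t :
  L x t = x ^+ (2 * t + 2) + x ^+ (2 * t + 5) * \sum_(i < t) x ^+ (2 * i)
        + x * \sum_(i < t) x ^+ (2 * i) + x ^+ (4 * t + 4) + 1.
Proof.
rewrite /L /Cset big_cat big_map big_seq1 /= big_split /=.
have -> : iota 1 t = map (addn 1) (index_iota 0 t) by rewrite /index_iota subn0 -iotaDl.
rewrite !big_map !big_mkord mulr_sumr mulr_sumr.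
have e1 : \sum_(i < t) x ^+ (2 * t + 2 + (2 * (1 + i) + 1)) = \sum_(i < t) x ^+ (2 * t + 5) * x ^+ (2 * i).
  by apply: eq_bigr => i _; rewrite -exprD; congr (_ ^+ _); lia.
have e2 : \sum_(i < t) x ^+ (2 * t + 2 - (2 * (1 + i) + 1)) = \sum_(i < t) x * x ^+ (2 * i).
  rewrite (reindex_inj rev_ord_inj) /=; apply: eq_bigr => i _; rewrite -exprS; congr (_ ^+ _); have := ltn_ord i; lia.
rewrite e1 e2.
have -> : (2 * t + 2 + (2 * t + 2) = 4 * t + 4)%N by lia.
rewrite subnn expr0.
move: (\sum_(i < t) _) (\sum_(i < t) _) => a b; ring.
Qed.

Lemma ident (R : comNzRingType) (x y E Ga Gb : R) :
 (x-1)^+2*(x+1)*(y*x^+2 + y*x^+5*E + x*E + y^+2*x^+4 + 1) - (x-1)^+2*(x+1)*(Ga*Gb*(1+x+x^+2)) =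
 2%:R * (-x - 2%:R*x^+2 + 2%:R*y*x^+2 + y*x^+3 + y*x^+4 + 2%:R*y*x^+5 - 2%:R*y^+2*x^+5 - y^+2*x^+6)
 + (x-1)*(y*x^+5+x)*((x^+2-1)*E - (y-1))
 - (x+1)*(1+x+x^+2)*(((x-1)*Ga - (y*x^+3-1))*((x-1)*Gb) + (y*x^+3-1)*((x-1)*Gb - (y*x-1))).
Proof. ring. Qed.

Lemma Lprod (x : {poly 'F_2}) t : x - 1 != 0 ->
  L x t = (\sum_(i < 2 * t + 3) x ^+ i) * (\sum_(i < 2 * t + 1) x ^+ i) * (\sum_(i < 3) x ^+ i).
Proof.
move=> x1.
have G3 : \sum_(i < 3) x ^+ i = 1 + x + x ^+ 2.
  by rewrite !big_ord_recr big_ord0 /= add0r expr0 expr1.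
have hE : (x ^+ 2 - 1) * \sum_(i < t) x ^+ (2 * i) = x ^+ (2 * t) - 1.
  rewrite exprM -(geo _ (x ^+ 2) t); congr (_ * _); apply: eq_bigr => i _; by rewrite exprM.
set y := x ^+ (2 * t).
have hA : (x - 1) * \sum_(i < 2 * t + 3) x ^+ i = y * x ^+ 3 - 1 by rewrite geo exprD.
have hB : (x - 1) * \sum_(i < 2 * t + 1) x ^+ i = y * x - 1 by rewrite geo exprD expr1.
have hx : x + 1 = x - 1.
  have m1 : (1 : {poly 'F_2}) = -1.
    by apply/eqP; rewrite -subr_eq0 opprK -mulr2n two0.
  by rewrite {1}m1.
have c0 : (x - 1) ^+ 2 * (x + 1) != 0 by rewrite hx -exprSr expf_neq0.
apply: (mulfI c0); apply/eqP; rewrite -subr_eq0; apply/eqP.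
rewrite Lform.
have -> : x ^+ (2 * t + 2) = y * x ^+ 2 by rewrite exprD.
have -> : x ^+ (2 * t + 5) = y * x ^+ 5 by rewrite exprD.
have -> : x ^+ (4 * t + 4) = y ^+ 2 * x ^+ 4 by rewrite exprD /y -exprM; congr (_ ^+ _ * _); lia.
move: (\sum_(i < t) _) hE => E hE.
move: (\sum_(i < 2 * t + 3) _) hA => Ga hA.
move: (\sum_(i < 2 * t + 1) _) hB => Gb hB.
rewrite G3 ident hE hA hB two0 -/y !subrr; ring.
Qed.

Lemma cop_add (p w d : {poly 'F_2}) : coprimep (p + w * d) d = coprimep p d.
Proof. by rewrite -coprimep_modl modpD modp_mull addr0 coprimep_modl. Qed.

Theorem proposition9 (m k t : nat) (hm : (0 < m)%N) (hk : (0 < k)%N) (ht : (0 < t)%N)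
  (htm : (4 * t + 3 < m)%N) :
  coprimep (cpoly m t \Po 'X^k) ('X^m - 1)
  <-> [/\ gcdn m ((2 * t + 3) * k) = gcdn m k,
          gcdn m ((2 * t + 1) * k) = gcdn m k &
          gcdn m (3 * k) = gcdn m k].
Proof.
rewrite comp_c.
set D := ('X^m - 1 : {poly 'F_2}).
set x : {poly 'F_2} := 'X^k.
have cX : coprimep ('X : {poly 'F_2}) D.
  rewrite -[X in coprimep X _]subr0 -polyC0 coprimep_sym coprimep_XsubC /root /D.
  by rewrite !hornerE expr0n eqn0Ngt hm /=.
have cx : coprimep (x ^+ (2 * t + 2)) D by apply: coprimep_expl; apply: coprimep_expl.
have -> : coprimep (1 + \sum_(j <- Cset t) (x ^+ j + x ^+ (m - j))) D
  = coprimep (x ^+ (2 * t + 2) * (1 + \sum_(j <- Cset t) (x ^+ j + x ^+ (m - j)))) D.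
  by rewrite coprimepMl cx.
rewrite shift; last by lia.
have /dvdpP [q hq] : D %| x ^+ m - 1.
  by rewrite /x -exprM; apply: XnB1_dvdn; apply: dvdn_mull.
rewrite hq mulrAC cop_add Lprod; last first.
  by rewrite -size_poly_gt0 /x -polyC1 size_XnsubC.
have o1 : odd (2 * t + 3) by rewrite oddD oddM.
have o2 : odd (2 * t + 1) by rewrite oddD oddM.
rewrite !coprimepMl !key //.
split => [/andP[/andP[/eqP a /eqP b] /eqP c] | [a b c]]; first by split.
by rewrite a b c !eqxx.
Qed.
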